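(* Let $\Bbbk$ be an algebraically closed field of characteristic $2$ and let $\mathfrak{u}(\mathfrak{m})$ be the algebra generated by $a,b,c$ with relations $ab+ba=c$, $ac+ca=a$, $bc+cb=b$, $a^4=b^4=0$, $c^2+c=0$. If $0\to V_1\to U\to V_0\to 0$ is an exact sequence of $\mathfrak{u}(\mathfrak{m})$-modules, then $U\simeq V_{\vartheta,\lambda,\mu}$ for some $\vartheta,\lambda,\mu\in\Bbbk$. Moreover $\dim\operatorname{Ext}^1_{\mathfrak{u}(\mathfrak{m})}(V_0,V_1)=2$.
   Context: $V_0$ is the one-dimensional module on which $a,b,c$ act by $0$. $V_1$ is the three-dimensional module with basis $v_1,v_2,v_3$ and action $av_1=v_2$, $av_2=v_3$, $av_3=0$; $bv_1=0$, $bv_2=v_1$, $bv_3=v_2$; $cv_1=v_1$, $cv_2=0$, $cv_3=v_3$. For $\vartheta,\lambda,\mu\in\Bbbk$, $V_{\vartheta,\lambda,\mu}$ is $\Bbbk^4$ with standard basis $e_1,\dots,e_4$ and action $ae_1=\vartheta e_2$, $ae_2=e_3$, $ae_3=e_4$, $ae_4=0$; $be_1=\lambda e_3+\mu e_4$, $be_2=0$, $be_3=e_2$, $be_4=e_3$; $ce_1=\lambda e_4$, $ce_2=e_2$, $ce_3=0$, $ce_4=e_4$. *)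

(* Defs.v *)
From HB Require Import structures.
From mathcomp Require Import all_boot all_order all_algebra.
Set Implicit Arguments. Unset Strict Implicit. Unset Printing Implicit Defensive.
Import GRing.Theory.
Local Open Scope ring_scope.

(* A finite-dimensional module over the algebra generated by a, b, c:
   the carrier is K^udim (column vectors) and a, b, c act by the matrices
   ua, ub, uc (entry (i,j) = coefficient of e_i in g e_j). *)
Record umod (K : fieldType) := UMod {
  udim : nat;
  ua : 'M[K]_udim; ub : 'M[K]_udim; uc : 'M[K]_udim }.

Definition is_umod (K : fieldType) (V : umod K) : Prop :=
  let A := ua V in let B := ub V in let C := uc V in
  [/\ A *m B + B *m A = C, A *m C + C *m A = A, B *m C + C *m B = B,
      A *m A *m A *m A = 0 /\ B *m B *m B *m B = 0 & C *m C + C = 0].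

Definition is_hom (K : fieldType) (V W : umod K) (f : 'M[K]_(udim W, udim V)) : Prop :=
  [/\ f *m ua V = ua W *m f, f *m ub V = ub W *m f & f *m uc V = uc W *m f].

Definition mx_injective (K : fieldType) m n (f : 'M[K]_(m, n)) : Prop :=
  forall v : 'cV[K]_n, f *m v = 0 -> v = 0.

Definition mx_surjective (K : fieldType) m n (f : 'M[K]_(m, n)) : Prop :=
  forall w : 'cV[K]_m, exists v : 'cV[K]_n, f *m v = w.

Definition short_exact (K : fieldType) (L M N : umod K)
  (f : 'M[K]_(udim M, udim L)) (g : 'M[K]_(udim N, udim M)) : Prop :=
  [/\ is_hom f, is_hom g, mx_injective f, mx_surjective g
    & forall v : 'cV[K]_(udim M), g *m v = 0 <-> exists w, v = f *m w].

Definition isomorphic (K : fieldType) (V W : umod K) : Prop :=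
  exists f : 'M[K]_(udim W, udim V), [/\ is_hom f, mx_injective f & mx_surjective f].

Definition V0 (K : fieldType) : umod K := @UMod K 1 0 0 0.

Definition mxf (K : fieldType) n (F : nat -> nat -> K) : 'M[K]_n :=
  \matrix_(i < n, j < n) F (val i) (val j).

(* V_1 with basis v1 v2 v3 (indices 0,1,2) *)
Definition V1a (K : fieldType) : nat -> nat -> K := fun i j =>
  match i, j with 1%N, 0%N => 1 | 2%N, 1%N => 1 | _, _ => 0 end.
Definition V1b (K : fieldType) : nat -> nat -> K := fun i j =>
  match i, j with 0%N, 1%N => 1 | 1%N, 2%N => 1 | _, _ => 0 end.
Definition V1c (K : fieldType) : nat -> nat -> K := fun i j =>
  match i, j with 0%N, 0%N => 1 | 2%N, 2%N => 1 | _, _ => 0 end.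
Definition V1 (K : fieldType) : umod K :=
  @UMod K 3 (mxf 3 (@V1a K)) (mxf 3 (@V1b K)) (mxf 3 (@V1c K)).

(* V_{theta,lambda,mu} with basis e1..e4 (indices 0..3) *)
Definition Va (K : fieldType) (th : K) : nat -> nat -> K := fun i j =>
  match i, j with 1%N, 0%N => th | 2%N, 1%N => 1 | 3%N, 2%N => 1 | _, _ => 0 end.
Definition Vb (K : fieldType) (la mu : K) : nat -> nat -> K := fun i j =>
  match i, j with 2%N, 0%N => la | 3%N, 0%N => mu | 1%N, 2%N => 1 | 2%N, 3%N => 1
  | _, _ => 0 end.
Definition Vc (K : fieldType) (la : K) : nat -> nat -> K := fun i j =>
  match i, j with 3%N, 0%N => la | 1%N, 1%N => 1 | 3%N, 3%N => 1 | _, _ => 0 end.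
Definition Vtlm (K : fieldType) (th la mu : K) : umod K :=
  @UMod K 4 (mxf 4 (Va th)) (mxf 4 (Vb la mu)) (mxf 4 (Vc la)).

(* Ext^1(M, N) via Yoneda extensions 0 -> N -> U -> M -> 0 realised on N (+) M:
   a cocycle is a triple (Xa, Xb, Xc) such that the block upper-triangular
   matrices [[N_g, X_g], [0, M_g]] define a module; coboundaries are those
   of the form X_g = N_g Y - Y M_g (change of splitting). *)
Definition ext_mod (K : fieldType) (N M : umod K) (Xa Xb Xc : 'M[K]_(udim N, udim M)) :
  umod K :=
  @UMod K (udim N + udim M) (block_mx (ua N) Xa 0 (ua M))
    (block_mx (ub N) Xb 0 (ub M)) (block_mx (uc N) Xc 0 (uc M)).

Definition is_cocycle (K : fieldType) (N M : umod K) (Xa Xb Xc : 'M[K]_(udim N, udim M)) :=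
  is_umod (ext_mod Xa Xb Xc).

Definition is_coboundary (K : fieldType) (N M : umod K) (Xa Xb Xc : 'M[K]_(udim N, udim M)) :=
  exists Y : 'M[K]_(udim N, udim M),
    [/\ Xa = ua N *m Y - Y *m ua M, Xb = ub N *m Y - Y *m ub M
      & Xc = uc N *m Y - Y *m uc M].

Definition ext1_dim (K : fieldType) (M N : umod K) (d : nat) : Prop :=
  exists Za Zb Zc : 'I_d -> 'M[K]_(udim N, udim M),
  [/\ forall i, is_cocycle (Za i) (Zb i) (Zc i),
      forall Xa Xb Xc, is_cocycle Xa Xb Xc ->
        exists al : 'I_d -> K,
          is_coboundary (Xa - \sum_i al i *: Za i) (Xb - \sum_i al i *: Zb i)
                        (Xc - \sum_i al i *: Zc i)
    & forall al : 'I_d -> K,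
        is_coboundary (\sum_i al i *: Za i) (\sum_i al i *: Zb i) (\sum_i al i *: Zc i) ->
        forall i, al i = 0].

(* Main.v *)
Require Import Defs.
From HB Require Import structures.
From mathcomp Require Import all_boot all_order all_algebra.
From mathcomp Require Import ring.
Import GRing.Theory.
Local Open Scope ring_scope.

Section S.
Variable K : fieldType.
Hypothesis char2 : (2 \in [pchar K])%N.

Definition cv3 (a b c : K) : 'cV[K]_3 := \matrix_(i < 3, j < 1) nth 0 [:: a; b; c] i.
Definition cv4 (a b c d : K) : 'cV[K]_4 := \matrix_(i < 4, j < 1) nth 0 [:: a; b; c; d] i.
Local Notation A1 := (mxf 3 (@V1a K)).
Local Notation B1 := (mxf 3 (@V1b K)).
Local Notation C1 := (mxf 3 (@V1c K)).
Definition qr : 'M[K]_(1,4) := \matrix_(i<1, j<4) nth 0 [:: 1; 0; 0; 0] j.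
Definition Pm (t0 t1 : K) : 'M[K]_(3,4) := \matrix_(i<3,j<4)
  nth 0 (nth [::] [:: [:: -t0;1;0;0]; [:: -t1;0;1;0]; [:: 0;0;0;1]] i) j.

Ltac crunch := apply/matrixP;
  let i := fresh "i" in let j := fresh "j" in let Hi := fresh "Hi" in let Hj := fresh "Hj" in
  intros [[|[|[|[|i]]]] Hi] [[|[|[|[|j]]]] Hj];
  try (exfalso; move: Hi; by rewrite !ltnS ltn0);
  try (exfalso; move: Hj; by rewrite !ltnS ltn0);
  rewrite ?(mxE, big_ord_recl, big_ord0) /=; try ring.

Lemma cv3E (x : 'cV[K]_3) : exists a b c, x = cv3 a b c.
Proof.
exists (x ord0 0), (x (@Ordinal 3 1 isT) 0), (x (@Ordinal 3 2 isT) 0).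
apply/matrixP => i j; rewrite !mxE (ord1 j).
case: i => [[|[|[|i]]] Hi] //=; congr (x _ _); exact: val_inj.
Qed.

Lemma cv4E (x : 'cV[K]_4) : exists a b c d, x = cv4 a b c d.
Proof.
exists (x ord0 0), (x (@Ordinal 4 1 isT) 0), (x (@Ordinal 4 2 isT) 0), (x (@Ordinal 4 3 isT) 0).
apply/matrixP => i j; rewrite !mxE (ord1 j).
case: i => [[|[|[|[|i]]]] Hi] //=; congr (x _ _); exact: val_inj.
Qed.

Lemma cv3_inj a b c a' b' c' : cv3 a b c = cv3 a' b' c' -> [/\ a = a', b = b' & c = c'].
Proof.
move/matrixP => H; split.
- by move: (H ord0 0); rewrite !mxE.
- by move: (H (@Ordinal 3 1 isT) 0); rewrite !mxE.
- by move: (H (@Ordinal 3 2 isT) 0); rewrite !mxE.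
Qed.

Lemma A1cv a b c : A1 *m cv3 a b c = cv3 0 a b. Proof. crunch. Qed.
Lemma B1cv a b c : B1 *m cv3 a b c = cv3 b c 0. Proof. crunch. Qed.
Lemma C1cv a b c : C1 *m cv3 a b c = cv3 a 0 c. Proof. crunch. Qed.
Lemma addcv a b c a' b' c' : cv3 a b c + cv3 a' b' c' = cv3 (a+a') (b+b') (c+c').
Proof. crunch. Qed.
Lemma scalecv k a b c : k *: cv3 a b c = cv3 (k*a) (k*b) (k*c). Proof. crunch. Qed.
Lemma cv0 : (0 : 'cV[K]_3) = cv3 0 0 0. Proof. crunch. Qed.

Lemma two0 (a : K) : a + a = 0. Proof. exact: addrr_pchar2. Qed.

Lemma V1r1 : A1 *m B1 + B1 *m A1 = C1.
Proof. crunch; rewrite ?(mul0r, mul1r, add0r, addr0) //; exact: two0. Qed.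
Lemma V1r2 : A1 *m C1 + C1 *m A1 = A1. Proof. crunch. Qed.
Lemma V1r3 : B1 *m C1 + C1 *m B1 = B1. Proof. crunch. Qed.
Lemma V1r4 : A1 *m A1 *m A1 *m A1 = 0. Proof. crunch. Qed.
Lemma V1r5 : B1 *m B1 *m B1 *m B1 = 0. Proof. crunch. Qed.
Lemma V1r6 : C1 *m C1 + C1 = 0.
Proof. crunch; rewrite ?(mul0r, mul1r, add0r, addr0) //; exact: two0. Qed.

Lemma qVa th : qr *m mxf 4 (Va th) = 0. Proof. crunch. Qed.
Lemma qVb la mu : qr *m mxf 4 (Vb la mu) = 0. Proof. crunch. Qed.
Lemma qVc la : qr *m mxf 4 (Vc la) = 0. Proof. crunch. Qed.


Lemma mx_ext m n (M N : 'M[K]_(m, n)) : (forall v : 'cV_n, M *m v = N *m v) -> M = N.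
Proof.
move=> H; apply/matrixP => i j.
by move: (H (delta_mx j 0)); rewrite -!colE => /matrixP/(_ i 0); rewrite !mxE.
Qed.

Lemma inj_eq m n (f : 'M[K]_(m, n)) (a b : 'cV[K]_n) : mx_injective f -> f *m a = f *m b -> a = b.
Proof.
move=> fi E; apply/eqP; rewrite -subr_eq0; apply/eqP; apply: fi.
by rewrite mulmxBr E subrr.
Qed.

Lemma part1 (U : umod K) : is_umod U ->
  forall (f : 'M[K]_(udim U, udim (V1 K))) (g : 'M[K]_(udim (V0 K), udim U)),
  short_exact f g -> exists th la mu : K, isomorphic (Vtlm th la mu) U.
Proof.
move=> [HAB HAC HBC [HA4 HB4] HC] f g [[fa fb fc] [ga gb gc] finj gsurj gex].
have Z0 : forall M : 'M[K]_(1, udim U), ua (V0 K) *m M = 0.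
  move=> M; apply/matrixP => i j; rewrite !mxE big1 // => k _; by rewrite mxE mul0r.
rewrite Z0 in ga; rewrite Z0 in gb; rewrite Z0 in gc.
rewrite /= in fa fb fc.
have [u gu] := gsurj (1%:M : 'M[K]_1).
have gf : g *m f = 0.
  apply: mx_ext => v; rewrite mul0mx -mulmxA; apply/gex; by exists v.
have kerx : forall w, g *m w = 0 -> exists x, w = f *m x := fun w h => (gex w).1 h.
have [x Hx] : exists x, ua U *m u = f *m x by apply: kerx; rewrite mulmxA ga mul0mx.
have [y Hy] : exists x, ub U *m u = f *m x by apply: kerx; rewrite mulmxA gb mul0mx.
have [z Hz] : exists x, uc U *m u = f *m x by apply: kerx; rewrite mulmxA gc mul0mx.
have E1 : A1 *m y + B1 *m x = z.
  move: (congr1 (mulmx^~ u) HAB).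
  by rewrite mulmxDl -!mulmxA Hy Hx Hz !mulmxA -fa -fb -!mulmxA -mulmxDr; exact: inj_eq.
have E2 : A1 *m z + C1 *m x = x.
  move: (congr1 (mulmx^~ u) HAC).
  by rewrite mulmxDl -!mulmxA Hz Hx !mulmxA -fa -fc -!mulmxA -mulmxDr; exact: inj_eq.
have E3 : B1 *m z + C1 *m y = y.
  move: (congr1 (mulmx^~ u) HBC).
  by rewrite mulmxDl -!mulmxA Hz Hy !mulmxA -fb -fc -!mulmxA -mulmxDr; exact: inj_eq.
have E4 : C1 *m z + z = 0.
  move: (congr1 (mulmx^~ u) HC).
  by rewrite mulmxDl -!mulmxA Hz !mulmxA -fc -!mulmxA -mulmxDr mul0mx -(mulmx0 _ f); exact: inj_eq.
move: Hx Hy Hz E1 E2 E3 E4.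
have [x0 [x1 [x2 ->]]] := cv3E x.
have [y0 [y1 [y2 ->]]] := cv3E y.
have [z0 [z1 [z2 ->]]] := cv3E z.
rewrite cv0 !(A1cv, B1cv, C1cv, addcv) => Hx Hy Hz.
rewrite !(add0r, addr0).
move=> /cv3_inj [e1 e2 e3] /cv3_inj [e4 e5 e6] /cv3_inj [e7 e8 e9] /cv3_inj [e10 e11 e12].
have ey : y0 = x2.
  by rewrite -(oppr_pchar2 char2 x2); apply/eqP; rewrite -addr_eq0 e2 e11.
rewrite e11 e8 e5 in Hz; rewrite ey in Hy.
clear -Hx Hy Hz fa fb fc gu gf finj kerx.
pose phi := u *m qr + f *m Pm x1 x2.
exists x0, y1, y2, phi; split; [split| |].
- rewrite /phi /= mulmxDl mulmxDr -!mulmxA qVa mulmx0 add0r.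
  rewrite !mulmxA Hx -fa -!mulmxA -mulmxDr; congr (f *m _); crunch.
- rewrite /phi /= mulmxDl mulmxDr -!mulmxA qVb mulmx0 add0r.
  rewrite !mulmxA Hy -fb -!mulmxA -mulmxDr; congr (f *m _); crunch.
- rewrite /phi /= mulmxDl mulmxDr -!mulmxA qVc mulmx0 add0r.
  rewrite !mulmxA Hz -fc -!mulmxA -mulmxDr; congr (f *m _); crunch.
- move=> v Hv.
  have Hq : qr *m v = 0.
    move: (congr1 (mulmx g) Hv); rewrite /phi mulmx0 mulmxDl mulmxDr.
    by rewrite !mulmxA gu gf mul1mx !mul0mx addr0.
  move: Hv; rewrite /phi mulmxDl -!mulmxA Hq mulmx0 add0r -(mulmx0 _ f).
  move/(@inj_eq _ _ f _ _ finj) => HP.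
  move: Hq HP; have [v0 [v1 [v2 [v3 ->]]]] := cv4E v.
  move=> /matrixP /(_ ord0 ord0); rewrite !(mxE, big_ord_recl, big_ord0) /=.
  rewrite !(mul1r, mul0r, addr0) => ->.
  move=> /matrixP HP.
  move: (HP ord0 0) (HP (@Ordinal 3 1 isT) 0) (HP (@Ordinal 3 2 isT) 0).
  rewrite !(mxE, big_ord_recl, big_ord0) /= !(mul1r, mul0r, mulr0, addr0, add0r).
  move=> -> -> ->; crunch.
- move=> w.
  have [r Hr] : exists r, w - u *m (g *m w) = f *m r.
    by apply: kerx; rewrite mulmxBr mulmxA gu mul1mx subrr.
  move: Hr; have [r0 [r1 [r2 ->]]] := cv3E r.
  rewrite [g *m w]mx11_scalar; set s0 := (g *m w) 0 0 => Hr.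
  exists (cv4 s0 (r0 + x1 * s0) (r1 + x2 * s0) r2).
  rewrite /phi mulmxDl -!mulmxA.
  have -> : qr *m cv4 s0 (r0 + x1 * s0) (r1 + x2 * s0) r2 = s0%:M by crunch.
  have -> : Pm x1 x2 *m cv4 s0 (r0 + x1 * s0) (r1 + x2 * s0) r2 = cv3 r0 r1 r2 by crunch.
  by rewrite -Hr addrC subrK.
Qed.

Lemma bmul m p (A B : 'M[K]_m) (X Y : 'M[K]_(m, p)) :
  block_mx A X (0 : 'M[K]_(p, m)) (0 : 'M[K]_p) *m block_mx B Y (0 : 'M[K]_(p, m)) (0 : 'M[K]_p) = block_mx (A *m B) (A *m Y) 0 0.
Proof. by rewrite mulmx_block !mulmx0 !mul0mx !addr0. Qed.

Lemma badd m p (A B : 'M[K]_m) (X Y : 'M[K]_(m, p)) :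
  block_mx A X (0 : 'M[K]_(p, m)) (0 : 'M[K]_p) + block_mx B Y (0 : 'M[K]_(p, m)) (0 : 'M[K]_p) = block_mx (A + B) (X + Y) 0 0.
Proof. by rewrite add_block_mx !addr0. Qed.

Lemma beq m p (A B : 'M[K]_m) (X Y : 'M[K]_(m, p)) :
  block_mx A X (0 : 'M[K]_(p, m)) (0 : 'M[K]_p) = block_mx B Y (0 : 'M[K]_(p, m)) (0 : 'M[K]_p) <-> A = B /\ X = Y.
Proof.
split; first by case/eq_block_mx.
by case=> -> ->.
Qed.

Lemma cocycle_iff x0 x1 x2 y0 y1 y2 z0 z1 z2 :
  @is_cocycle K (V1 K) (V0 K) (cv3 x0 x1 x2) (cv3 y0 y1 y2) (cv3 z0 z1 z2) <->
  [/\ z0 = x1, z1 = 0, z2 = y1 & y0 = x2].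
Proof.
rewrite /is_cocycle /is_umod /ext_mod /=.
have Z : (0 : 'M[K]_(3 + 1)) = block_mx 0 0 0 0 by rewrite block_mx0.
rewrite Z !(bmul, badd).
rewrite V1r1 V1r2 V1r3 V1r4 V1r5 V1r6 -!mulmxA cv0 !(A1cv, B1cv, C1cv, addcv).
split.
- case=> /eq_block_mx [_ /cv3_inj [e1 e2 e3] _ _] /eq_block_mx [_ /cv3_inj [e4 e5 e6] _ _]
     /eq_block_mx [_ /cv3_inj [e7 e8 e9] _ _] _ /eq_block_mx [_ /cv3_inj [e10 e11 e12] _ _].
  move: e1 e2 e3 e4 e5 e6 e7 e8 e9 e10 e11 e12; rewrite !(add0r, addr0) => e1 e2 e3 e4 e5 e6 e7 e8 e9 e10 e11 e12.
  split=> //.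
  by rewrite -(oppr_pchar2 char2 x2); apply/eqP; rewrite -addr_eq0 e2 e11.
- case=> -> -> -> ->; rewrite !(add0r, addr0, two0) //.
Qed.

Lemma cobound_iff (Xa Xb Xc : 'cV[K]_3) :
  @is_coboundary K (V1 K) (V0 K) Xa Xb Xc <->
  exists Y, [/\ Xa = A1 *m Y, Xb = B1 *m Y & Xc = C1 *m Y].
Proof.
rewrite /is_coboundary.
have Z : forall Y : 'cV[K]_3, Y *m ua (V0 K) = 0.
  move=> Y; apply/matrixP => i j; rewrite !mxE big1 // => k _; by rewrite mxE mulr0.
split; case=> Y [Ha Hb Hc]; exists Y; move: Ha Hb Hc; rewrite !Z !subr0 //.
Qed.

Lemma part2 : ext1_dim (V0 K) (V1 K) 2.
Proof.
exists (fun i => if (val i == 0)%N then cv3 1 0 0 else cv3 0 0 0),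
       (fun i => if (val i == 0)%N then cv3 0 0 0 else cv3 0 0 1),
       (fun _ => cv3 0 0 0); split.
- by case=> [[|[|i]] Hi] //=; apply/cocycle_iff.
- move=> Xa Xb Xc.
  have [x0 [x1 [x2 ->]]] := cv3E Xa.
  have [y0 [y1 [y2 ->]]] := cv3E Xb.
  have [z0 [z1 [z2 ->]]] := cv3E Xc.
  case/cocycle_iff => -> -> -> ->.
  exists (fun i => if (val i == 0)%N then x0 else y2).
  apply/cobound_iff; exists (cv3 x1 x2 y1).
  rewrite !big_ord_recl !big_ord0 /=; split; crunch.
- move=> al; rewrite !big_ord_recl !big_ord0 /=.
  case/cobound_iff => Y; have [a [b [c ->]]] := cv3E Y.
  rewrite cv0 !(scalecv, addcv, A1cv, B1cv, C1cv).
  case=> /cv3_inj [e0 _ _] /cv3_inj [_ _ e4] _.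
  move: e0 e4; rewrite !(mulr0, mulr1, addr0, add0r) => h0 h1.
  case=> [[|[|i]] Hi].
  + by rewrite -h0; congr al; apply: val_inj.
  + by rewrite -h1; congr al; apply: val_inj.
  + by [].
Qed.

End S.

Theorem lemma3p6 (K : closedFieldType) (char2 : (2 \in [pchar K])%N) :
  (forall (U : umod K), is_umod U ->
     forall (f : 'M[K]_(udim U, udim (V1 K))) (g : 'M[K]_(udim (V0 K), udim U)),
       short_exact f g ->
       exists th la mu : K, isomorphic (Vtlm th la mu) U)
  /\ ext1_dim (V0 K) (V1 K) 2.
Proof.
split; [exact: part1 | exact: part2].
Qed.
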